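(* Fix real numbers $\{\Theta_{kj}\}_{k,j\in[K]}$. For $\mathbf{P}\in[0,1]^K$ and $(\boldsymbol{\alpha},\boldsymbol{\gamma})\in[-\pi,\pi)^{2K}$ let $\beta_{kj}=\cos^2(\alpha_j+\Theta_{kj}-\Theta_{jj}-\gamma_k)$ and $R_{sum}(\mathbf{P},\boldsymbol{\alpha},\boldsymbol{\gamma})=\sum_{k=1}^K\ln\!\left(1+\frac{P_k\beta_{kk}}{\sum_{j\ne k}P_j\beta_{kj}+\frac12}\right)$. Then for any $\mathbf{P}\in[0,1]^K$ and $(\boldsymbol{\alpha},\boldsymbol{\gamma})\in[-\pi,\pi)^{2K}$, $$R_{sum}(\mathbf{P},\boldsymbol{\alpha},\boldsymbol{\gamma})\le 2\max_{\mathcal{S}\subset[K]}R_{sum}(\mathbf{1}_{\mathcal{S}},\boldsymbol{\alpha},\boldsymbol{\gamma}),$$ where $\mathbf{1}_{\mathcal{S}}\in\{0,1\}^K$ has $k$-th component $1$ if $k\in\mathcal{S}$ and $0$ otherwise. *)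

(* Defs.v *)
(* concrete reals R. Indices [K] = {0,...,K-1}. *)
From Stdlib Require Import Reals List.
Open Scope R_scope.

Definition sumK (K : nat) (f : nat -> R) : R :=
  fold_right Rplus 0 (map f (seq 0 K)).

Definition sumK_ne (K k : nat) (f : nat -> R) : R :=
  fold_right Rplus 0 (map f (filter (fun j => negb (Nat.eqb j k)) (seq 0 K))).

Definition beta (Theta : nat -> nat -> R) (alpha gamma : nat -> R) (k j : nat) : R :=
  (cos (alpha j + Theta k j - Theta j j - gamma k)) ^ 2.

Definition Rsum (K : nat) (Theta : nat -> nat -> R)
  (P alpha gamma : nat -> R) : R :=
  sumK K (fun k =>
    ln (1 + P k * beta Theta alpha gamma k k /
            (sumK_ne K k (fun j => P j * beta Theta alpha gamma k j) + / 2))).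

Definition indic (S : nat -> bool) : nat -> R := fun k => if S k then 1 else 0.

(* Main.v *)
Require Import Defs.
From Stdlib Require Import Reals List Lra Lia FunctionalExtensionality Arith.
From Coquelicot Require Import Coquelicot.
Open Scope R_scope.

Lemma ln1p_le x : 0 <= x -> ln (1 + x) <= x.
Proof.
  intros Hx. rewrite <- (ln_exp x) at 2. apply ln_le; [lra|apply exp_ineq1_le].
Qed.

Lemma ln1p_ge y : 0 <= y -> 2 * y / (2 + y) <= ln (1 + y).
Proof.
  intros Hy. destruct (Req_dec_T y 0) as [->|Hy0].
  - replace (1+0) with 1 by ring. rewrite ln_1. unfold Rdiv. lra.
  - set (h := fun z => ln (1 + z) - 2 * z / (2 + z)).
    set (h' := fun z => / (1 + z) - 4 / ((2 + z) * (2 + z))).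
    destruct (MVT_cor2 h h' 0 y) as [c [Hc1 Hc2]]; [lra| |].
    + intros c Hc. apply is_derive_Reals. unfold h, h'.
      auto_derive; [lra|]. field; lra.
    + assert (h 0 = 0) as H0 by (unfold h; replace (1+0) with 1 by ring; rewrite ln_1; unfold Rdiv; lra).
      assert (0 <= h' c).
      { unfold h'. replace (/ (1 + c) - 4 / ((2 + c) * (2 + c)))
          with (c * c / ((1 + c) * ((2 + c) * (2 + c)))) by (field; lra).
        apply Rmult_le_pos; [nra|]. apply Rlt_le, Rinv_0_lt_compat. nra. }
      assert (0 <= h y) by nra. unfold h in *. lra.
Qed.

Lemma g_cvx_lt b x0 x1 t : 0 <= b -> 0 < x0 -> x0 < x1 -> 0 < t < 1 ->
  ln (1 + b / ((1 - t) * x0 + t * x1)) <= (1 - t) * ln (1 + b / x0) + t * ln (1 + b / x1).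
Proof.
  intros Hb H0 H01 Ht.
  set (g := fun x => ln (x + b) - ln x).
  set (g' := fun x => / (x + b) - / x).
  assert (Hg : forall x, 0 < x -> ln (1 + b / x) = g x).
  { intros x Hx. unfold g. rewrite <- ln_div by lra. f_equal. field. lra. }
  set (x := (1 - t) * x0 + t * x1).
  assert (Hx0 : x0 < x) by (unfold x; nra).
  assert (Hx1 : x < x1) by (unfold x; nra).
  assert (Hd : forall a c, 0 < a -> a < c -> forall z, a <= z <= c -> derivable_pt_lim g z (g' z)).
  { intros a c Ha Hac z Hz. apply is_derive_Reals. unfold g, g'.
    auto_derive; [lra|]. field; lra. }
  destruct (MVT_cor2 g g' x0 x) as [c1 [E1 Hc1]]; [lra|apply (Hd x0 x); lra|].
  destruct (MVT_cor2 g g' x x1) as [c2 [E2 Hc2]]; [lra|apply (Hd x x1); lra|].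
  assert (Hmon : g' c1 <= g' c2).
  { unfold g'.
    replace (/ (c1 + b) - / c1) with (- (b * / (c1 * (c1 + b)))) by (field; lra).
    replace (/ (c2 + b) - / c2) with (- (b * / (c2 * (c2 + b)))) by (field; lra).
    apply Ropp_le_contravar, Rmult_le_compat_l; [lra|].
    apply Rinv_le_contravar; [nra|]. nra. }
  rewrite !Hg by lra.
  assert (E : (1 - t) * g x0 + t * g x1 - g x = t * (1 - t) * (x1 - x0) * (g' c2 - g' c1)).
  { replace (g x0) with (g x - g' c1 * (x - x0)) by lra.
    replace (g x1) with (g x + g' c2 * (x1 - x)) by lra.
    unfold x. ring. }
  assert (0 <= t * (1 - t) * (x1 - x0) * (g' c2 - g' c1)).
  { apply Rmult_le_pos; [|lra]. apply Rmult_le_pos; [|lra]. nra. }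
  lra.
Qed.

Lemma g_cvx b x0 x1 t : 0 <= b -> 0 < x0 -> 0 < x1 -> 0 <= t <= 1 ->
  ln (1 + b / ((1 - t) * x0 + t * x1)) <= (1 - t) * ln (1 + b / x0) + t * ln (1 + b / x1).
Proof.
  intros Hb H0 H1 Ht.
  destruct (Req_dec_T t 0) as [->|Ht0].
  { replace ((1-0)*x0+0*x1) with x0 by ring. lra. }
  destruct (Req_dec_T t 1) as [->|Ht1].
  { replace ((1-1)*x0+1*x1) with x1 by ring. lra. }
  destruct (Rtotal_order x0 x1) as [Hlt|[Heq|Hgt]].
  - apply g_cvx_lt; lra.
  - subst. replace ((1-t)*x1+t*x1) with x1 by ring. lra.
  - pose proof (g_cvx_lt b x1 x0 (1 - t) Hb H1 Hgt ltac:(lra)).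
    replace ((1 - t) * x0 + t * x1) with ((1 - (1 - t)) * x1 + (1 - t) * x0) by ring.
    lra.
Qed.

Definition fsum {A} (l : list A) (f : A -> R) := fold_right Rplus 0 (map f l).

Lemma fsum_ext {A} (l : list A) f g : (forall x, In x l -> f x = g x) -> fsum l f = fsum l g.
Proof. induction l; simpl; intros H; [reflexivity|]. unfold fsum in *; simpl.
  rewrite H by auto. rewrite IHl by auto. reflexivity. Qed.

Lemma fsum_le {A} (l : list A) f g : (forall x, In x l -> f x <= g x) -> fsum l f <= fsum l g.
Proof. induction l; simpl; intros H; unfold fsum in *; simpl; [lra|].
  apply Rplus_le_compat; auto. Qed.

Lemma fsum_nonneg {A} (l : list A) f : (forall x, In x l -> 0 <= f x) -> 0 <= fsum l f.
Proof. induction l; simpl; intros H; unfold fsum in *; simpl; [lra|].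
  apply Rplus_le_le_0_compat; auto. Qed.

Lemma fsum_lin {A} (l : list A) f g t :
  fsum l (fun x => (1 - t) * f x + t * g x) = (1 - t) * fsum l f + t * fsum l g.
Proof. induction l; unfold fsum in *; simpl; [ring|]. rewrite IHl. ring. Qed.

Lemma fsum_scal {A} (l : list A) f c : fsum l (fun x => c * f x) = c * fsum l f.
Proof. induction l; unfold fsum in *; simpl; [ring|]. rewrite IHl. ring. Qed.

Definition valid K (P : nat -> R) := forall k, (k < K)%nat -> 0 <= P k <= 1.

Definition Iint K Theta alpha gamma (P : nat -> R) k :=
  sumK_ne K k (fun j => P j * beta Theta alpha gamma k j).

Definition Hf K Theta alpha gamma (P : nat -> R) :=
  sumK K (fun k => P k * ln (1 + beta Theta alpha gamma k k /
                                   (Iint K Theta alpha gamma P k + / 2))).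

Definition upd (P : nat -> R) m t := fun j => if Nat.eqb j m then t else P j.

Lemma beta_bnd Theta alpha gamma k j : 0 <= beta Theta alpha gamma k j <= 1.
Proof. unfold beta. pose proof (COS_bound (alpha j + Theta k j - Theta j j - gamma k)).
  simpl. nra. Qed.

Lemma in_ne K k j : In j (filter (fun j => negb (Nat.eqb j k)) (seq 0 K)) -> (j < K)%nat /\ j <> k.
Proof. intros H. apply filter_In in H as [H1 H2]. apply in_seq in H1.
  split; [lia|]. intros ->. rewrite Nat.eqb_refl in H2. discriminate. Qed.

Lemma I_nonneg K Theta alpha gamma P k : valid K P -> 0 <= Iint K Theta alpha gamma P k.
Proof. intros HP. apply (fsum_nonneg _ _). intros j Hj. apply in_ne in Hj as [Hj _].
  pose proof (HP j Hj). pose proof (beta_bnd Theta alpha gamma k j). nra. Qed.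

Lemma I_ext K Theta alpha gamma P Q k : (forall j, (j < K)%nat -> j <> k -> P j = Q j) ->
  Iint K Theta alpha gamma P k = Iint K Theta alpha gamma Q k.
Proof. intros H. apply (fsum_ext _ _ _). intros j Hj. apply in_ne in Hj as [Hj Hk].
  rewrite H; auto. Qed.

Lemma H_ext K Theta alpha gamma P Q : (forall j, (j < K)%nat -> P j = Q j) ->
  Hf K Theta alpha gamma P = Hf K Theta alpha gamma Q.
Proof. intros H. apply (fsum_ext _ _ _). intros k Hk. apply in_seq in Hk.
  rewrite H by lia. rewrite (I_ext K Theta alpha gamma P Q k); auto. Qed.

Lemma Rsum_le_2H K Theta alpha gamma P : valid K P ->
  Rsum K Theta P alpha gamma <= 2 * Hf K Theta alpha gamma P.
Proof. intros HP. unfold Hf, sumK. fold (fsum (seq 0 K) (fun k => P k * ln (1 + beta Theta alpha gamma k k /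
                                   (Iint K Theta alpha gamma P k + / 2)))).
  rewrite <- fsum_scal. apply (fsum_le _ _ _). intros k Hk. apply in_seq in Hk.
  fold (Iint K Theta alpha gamma P k).
  pose proof (I_nonneg K Theta alpha gamma P k HP) as HI.
  set (D := Iint K Theta alpha gamma P k + / 2).
  assert (HD : / 2 <= D) by (unfold D; lra).
  pose proof (beta_bnd Theta alpha gamma k k) as Hb.
  set (bb := beta Theta alpha gamma k k) in *.
  pose proof (HP k ltac:(lia)) as Hp.
  assert (HD0 : 0 < D) by lra.
  set (y := bb / D).
  assert (Hy0 : 0 <= y) by (unfold y; apply Rmult_le_pos; [lra|left; apply Rinv_0_lt_compat; lra]).
  assert (Hy2 : y <= 2).
  { unfold y. apply (Rmult_le_reg_r D); [lra|]. unfold Rdiv. rewrite Rmult_assoc, Rinv_l by lra. lra. }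
  pose proof (ln1p_ge y Hy0).
  replace (P k * bb / D) with (P k * y) by (unfold y; field; lra).
  pose proof (ln1p_le (P k * y) ltac:(nra)).
  assert (y / 2 <= 2 * y / (2 + y)).
  { apply (Rmult_le_reg_r (2 * (2 + y))); [lra|]. field_simplify; [|lra]. nra. }
  nra.
Qed.

Lemma H_indic K Theta alpha gamma S :
  Rsum K Theta (indic S) alpha gamma = Hf K Theta alpha gamma (indic S).
Proof. apply (fsum_ext _ _ _). intros k _. fold (Iint K Theta alpha gamma (indic S) k).
  unfold indic at 1 3. destruct (S k).
  - rewrite !Rmult_1_l. reflexivity.
  - rewrite Rmult_0_l. unfold Rdiv. rewrite Rmult_0_l, Rplus_0_r, ln_1. ring.
Qed.

Lemma upd_valid K P m t : valid K P -> 0 <= t <= 1 -> valid K (upd P m t).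
Proof. intros HP Ht k Hk. unfold upd. destruct (Nat.eqb k m); auto. Qed.

Lemma I_affine K Theta alpha gamma P m t k :
  Iint K Theta alpha gamma (upd P m t) k =
  (1 - t) * Iint K Theta alpha gamma (upd P m 0) k + t * Iint K Theta alpha gamma (upd P m 1) k.
Proof. unfold Iint, sumK_ne. fold (fsum (filter (fun j => negb (Nat.eqb j k)) (seq 0 K))
   (fun j => upd P m t j * beta Theta alpha gamma k j)).
  fold (fsum (filter (fun j => negb (Nat.eqb j k)) (seq 0 K))
   (fun j => upd P m 0 j * beta Theta alpha gamma k j)).
  fold (fsum (filter (fun j => negb (Nat.eqb j k)) (seq 0 K))
   (fun j => upd P m 1 j * beta Theta alpha gamma k j)).
  rewrite <- fsum_lin. apply (fsum_ext _ _ _). intros j _. unfold upd.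
  destruct (Nat.eqb j m); ring.
Qed.

Lemma H_cvx K Theta alpha gamma P m t : valid K P -> 0 <= t <= 1 ->
  Hf K Theta alpha gamma (upd P m t) <=
  (1 - t) * Hf K Theta alpha gamma (upd P m 0) + t * Hf K Theta alpha gamma (upd P m 1).
Proof. intros HP Ht. unfold Hf, sumK.
  fold (fsum (seq 0 K) (fun k => upd P m t k * ln (1 + beta Theta alpha gamma k k /
                                   (Iint K Theta alpha gamma (upd P m t) k + / 2)))).
  fold (fsum (seq 0 K) (fun k => upd P m 0 k * ln (1 + beta Theta alpha gamma k k /
                                   (Iint K Theta alpha gamma (upd P m 0) k + / 2)))).
  fold (fsum (seq 0 K) (fun k => upd P m 1 k * ln (1 + beta Theta alpha gamma k k /
                                   (Iint K Theta alpha gamma (upd P m 1) k + / 2)))).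
  rewrite <- fsum_lin. apply (fsum_le _ _ _). intros k Hk. apply in_seq in Hk.
  destruct (Nat.eq_dec k m) as [->|Hkm].
  - assert (E : forall s, Iint K Theta alpha gamma (upd P m s) m = Iint K Theta alpha gamma P m).
    { intros s. apply I_ext. intros j _ Hj. unfold upd. apply Nat.eqb_neq in Hj. rewrite Hj. auto. }
    rewrite !E. unfold upd. rewrite Nat.eqb_refl. lra.
  - assert (Ek : forall s, upd P m s k = P k).
    { intros s. unfold upd. apply Nat.eqb_neq in Hkm. rewrite Hkm. auto. }
    rewrite !Ek. rewrite I_affine.
    pose proof (I_nonneg K Theta alpha gamma (upd P m 0) k (upd_valid K P m 0 HP ltac:(lra))).
    pose proof (I_nonneg K Theta alpha gamma (upd P m 1) k (upd_valid K P m 1 HP ltac:(lra))).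
    pose proof (beta_bnd Theta alpha gamma k k).
    pose proof (HP k ltac:(lia)).
    set (I0 := Iint K Theta alpha gamma (upd P m 0) k) in *.
    set (I1 := Iint K Theta alpha gamma (upd P m 1) k) in *.
    replace ((1 - t) * I0 + t * I1 + / 2) with ((1 - t) * (I0 + / 2) + t * (I1 + / 2)) by field.
    pose proof (g_cvx (beta Theta alpha gamma k k) (I0 + /2) (I1 + /2) t ltac:(lra) ltac:(lra) ltac:(lra) Ht).
    assert (0 <= P k) by lra.
    set (A := ln (1 + beta Theta alpha gamma k k / ((1 - t) * (I0 + / 2) + t * (I1 + / 2)))) in *.
    set (B0 := ln (1 + beta Theta alpha gamma k k / (I0 + / 2))) in *.
    set (B1 := ln (1 + beta Theta alpha gamma k k / (I1 + / 2))) in *.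
    nra.
Qed.

Lemma round_step K Theta alpha gamma P m : valid K P ->
  Hf K Theta alpha gamma P <= Hf K Theta alpha gamma (upd P m 0) \/
  Hf K Theta alpha gamma P <= Hf K Theta alpha gamma (upd P m 1).
Proof. intros HP.
  assert (E : upd P m (P m) = P).
  { apply functional_extensionality. intros j. unfold upd.
    destruct (Nat.eqb j m) eqn:E; auto. apply Nat.eqb_eq in E. subst. auto. }
  destruct (le_lt_dec K m) as [Hm|Hm].
  - left. right. apply H_ext. intros j Hj. unfold upd.
    destruct (Nat.eqb j m) eqn:E'; auto. apply Nat.eqb_eq in E'. lia.
  - pose proof (HP m Hm).
    pose proof (H_cvx K Theta alpha gamma P m (P m) HP H). rewrite E in H0.
    destruct (Rle_dec (Hf K Theta alpha gamma (upd P m 0)) (Hf K Theta alpha gamma (upd P m 1))); [right|left]; nra.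
Qed.

Lemma round K Theta alpha gamma n : forall P, valid K P ->
  (forall j, (n <= j < K)%nat -> P j = 0 \/ P j = 1) ->
  exists S : nat -> bool, (forall k, (K <= k)%nat -> S k = false) /\
    Hf K Theta alpha gamma P <= Hf K Theta alpha gamma (indic S).
Proof.
  induction n as [|n IH]; intros P HP Hbin.
  - exists (fun j => if Nat.ltb j K then if Req_dec_T (P j) 1 then true else false else false).
    split.
    + intros k Hk. apply Nat.ltb_ge in Hk. rewrite Hk. auto.
    + right. apply H_ext. intros j Hj. unfold indic. apply Nat.ltb_lt in Hj as Hj'. rewrite Hj'.
      destruct (Req_dec_T (P j) 1); auto. destruct (Hbin j ltac:(lia)); auto. contradiction.
  - destruct (le_lt_dec K n) as [Hn|Hn].
    + apply IH; auto. intros j Hj. lia.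
    + assert (Hb : forall s, s = 0 \/ s = 1 -> forall j, (n <= j < K)%nat -> upd P n s j = 0 \/ upd P n s j = 1).
      { intros s Hs j Hj. unfold upd. destruct (Nat.eqb j n) eqn:E; auto.
        apply Nat.eqb_neq in E. apply Hbin. lia. }
      destruct (round_step K Theta alpha gamma P n HP) as [H|H].
      * destruct (IH (upd P n 0) (upd_valid K P n 0 HP ltac:(lra)) (Hb 0 ltac:(lra))) as [S [HS1 HS2]].
        exists S. split; auto. lra.
      * destruct (IH (upd P n 1) (upd_valid K P n 1 HP ltac:(lra)) (Hb 1 ltac:(lra))) as [S [HS1 HS2]].
        exists S. split; auto. lra.
Qed.

Lemma maxS (F : (nat -> bool) -> R) n : forall T : nat -> bool, exists S,
  (forall k, (n <= k)%nat -> S k = T k) /\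
  forall S', (forall k, (n <= k)%nat -> S' k = T k) -> F S' <= F S.
Proof.
  induction n as [|n IH]; intros T.
  - exists T. split; auto. intros S' H.
    replace S' with T; [lra|]. apply functional_extensionality. intros k. rewrite H; auto. lia.
  - set (Tb := fun b : bool => fun j => if Nat.eqb j n then b else T j).
    destruct (IH (Tb true)) as [S1 [A1 B1]]. destruct (IH (Tb false)) as [S0 [A0 B0]].
    assert (Hag : forall b S, (forall k, (n <= k)%nat -> S k = Tb b k) -> forall k, (Datatypes.S n <= k)%nat -> S k = T k).
    { intros b S H k Hk. rewrite H by lia. unfold Tb. destruct (Nat.eqb k n) eqn:E; auto.
      apply Nat.eqb_eq in E. lia. }
    destruct (Rle_dec (F S0) (F S1)).
    + exists S1. split; [eapply Hag; eauto|]. intros S' HS'.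
      destruct (S' n) eqn:ES.
      * apply B1. intros k Hk. unfold Tb. destruct (Nat.eqb k n) eqn:E.
        -- apply Nat.eqb_eq in E. subst. auto.
        -- apply Nat.eqb_neq in E. apply HS'. lia.
      * eapply Rle_trans; [apply B0|lra]. intros k Hk. unfold Tb. destruct (Nat.eqb k n) eqn:E.
        -- apply Nat.eqb_eq in E. subst. auto.
        -- apply Nat.eqb_neq in E. apply HS'. lia.
    + exists S0. split; [eapply Hag; eauto|]. intros S' HS'.
      destruct (S' n) eqn:ES.
      * eapply Rle_trans; [apply B1|lra]. intros k Hk. unfold Tb. destruct (Nat.eqb k n) eqn:E.
        -- apply Nat.eqb_eq in E. subst. auto.
        -- apply Nat.eqb_neq in E. apply HS'. lia.
      * apply B0. intros k Hk. unfold Tb. destruct (Nat.eqb k n) eqn:E.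
        -- apply Nat.eqb_eq in E. subst. auto.
        -- apply Nat.eqb_neq in E. apply HS'. lia.
Qed.

Theorem lemma2 (K : nat) (Theta : nat -> nat -> R) (P alpha gamma : nat -> R) :
  (forall k, (k < K)%nat -> 0 <= P k <= 1) ->
  (forall k, (k < K)%nat -> - PI <= alpha k < PI) ->
  (forall k, (k < K)%nat -> - PI <= gamma k < PI) ->
  exists S : nat -> bool,
    (forall k, (K <= k)%nat -> S k = false) /\
    (forall S' : nat -> bool,
       (forall k, (K <= k)%nat -> S' k = false) ->
       Rsum K Theta (indic S') alpha gamma <= Rsum K Theta (indic S) alpha gamma) /\
    Rsum K Theta P alpha gamma <= 2 * Rsum K Theta (indic S) alpha gamma.
Proof.
  intros HP _ _.
  destruct (maxS (fun S => Rsum K Theta (indic S) alpha gamma) K (fun _ => false)) as [S [HS1 HS2]].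
  exists S. split; [auto|]. split; [auto|].
  destruct (round K Theta alpha gamma K P HP ltac:(intros; lia)) as [S0 [H01 H02]].
  pose proof (Rsum_le_2H K Theta alpha gamma P HP).
  pose proof (HS2 S0 H01). rewrite <- H_indic in H02. lra.
Qed.
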